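(* Under the hypotheses of Theorem 2 (i.e. $\alpha_x,\alpha_y,\alpha_z>1$, $\alpha=\gcd(\alpha_x,\alpha_y,\alpha_z)$, $\beta_y=\alpha_y/\alpha$ odd), for each $i\in\{0,1,2,3\}$ the half-plane operators $X|_{\mathcal D_x^{g_i}}$ and $Z|_{\mathcal D_z^{g_i}}$ commute with every stabilizer generator $S_s$, and, up to multiplication by an element of the stabilizer group $\mathcal S$, $$X|_{\mathcal D_x^{g_i}}=\prod_{j=0}^{\alpha-1}X_{Li}^j,\qquad Z|_{\mathcal D_z^{g_i}}=\prod_{j=0}^{\alpha-1}Z_{Li}^j.$$
   Context: Chamon model: for positive integers $\alpha_x,\alpha_y,\alpha_z$ let $\mathcal A=\mathbb Z_{2\alpha_x}\times\mathbb Z_{2\alpha_y}\times\mathbb Z_{2\alpha_z}$ and $\mathcal D=\{(x,y,z)\in\mathcal A: x+y+z \text{ even}\}$, one qubit per point of $\mathcal D$. With $e_x^{\pm}=(\pm1,0,0)$, $e_y^{\pm}=(0,\pm1,0)$, $e_z^{\pm}=(0,0,\pm1)$, for $s\in\mathcal A\setminus\mathcal D$ the stabilizer generator is $S_s=X_{s+e_x^+}X_{s+e_x^-}Y_{s+e_y^+}Y_{s+e_y^-}Z_{s+e_z^+}Z_{s+e_z^-}$ (single-qubit Paulis, $Y=ZX$); $\mathcal S$ is the group they generate. For $\mathcal D'\subseteq\mathcal D$, $X|_{\mathcal D'}=\prod_{d\in\mathcal D'}X_d$, $Z|_{\mathcal D'}=\prod_{d\in\mathcal D'}Z_d$. Let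 $g_0=(0,0,0)$, $g_1=(1,1,0)$, $g_2=(1,0,1)$, $g_3=(0,1,1)$; half-plane sets $\mathcal D_x^{g_i}=\{g_i+2\lambda e_z^{+}+2\lambda' e_y^{+}:\lambda,\lambda'\in\mathbb Z\}$, $\mathcal D_z^{g_i}=\{g_i+2\lambda e_x^{+}+2\lambda' e_y^{+}:\lambda,\lambda'\in\mathbb Z\}$. Write $\alpha_x=\beta_x\alpha,\alpha_y=\beta_y\alpha,\alpha_z=\beta_z\alpha$; $g_{i,j}=g_i+2je_y^{+}$, $\mu_i=(-1)^{\lfloor i/2\rfloor}$, $\nu_i=(-1)^{\lceil i/2\rceil\bmod 2}$; $\mathcal G_{i,j}^x=\{g_{i,j}+2\lambda\alpha e_y^{+}+2\lambda'\alpha e_z^{+}:0\le\lambda<\beta_y,0\le\lambda'<\beta_z\}$, $\mathcal G_{i,j}^z=\{g_{i,j}+2\lambda\alpha e_y^{+}+2\lambda'\alpha e_x^{+}:0\le\lambda<\beta_y,0\le\lambda'<\beta_x\}$, $\mathcal D_x^{i,j}=\{g+\lambda(\mu_i e_z^{+}+e_y^{+})+\lambda'(\mu_i e_z^{+}+e_y^{-}):0\le\lambda,\lambda'<\alpha,\ g\in\mathcal G_{i,j}^x\}$, $\mathcal D_z^{i,j}=\{g+\lambda(\nu_i e_x^{+}+e_y^{+})+\lambda'(\nu_i e_x^{+}+e_y^{-}):0\le\lambda,\lambda'<\alpha,\ g\in\mathcal G_{i,j}^z\}$; $X_{Li}^j=X|_{\mathcal D_x^{i,j}}$, $Z_{Li}^j=Z|_{\mathcal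 D_z^{i,j}}$ (coordinates modulo $2\alpha_x,2\alpha_y,2\alpha_z$). *)

(* Defs.v *)
From mathcomp Require Import all_boot all_algebra.
From mathcomp Require Import boolp.
Set Implicit Arguments. Unset Strict Implicit. Unset Printing Implicit Defensive.
Import GRing.Theory Num.Theory.
Local Open Scope ring_scope.

(* Pauli operators (with real sign) on qubits indexed by a finite type T:
   the operator (-1)^sgn * Z^zp * X^xp, where Z^a = prod_{t, a t} Z_t. *)
Record pauli (T : finType) := Pauli { psgn : bool; pz : {ffun T -> bool}; px : {ffun T -> bool} }.

Definition dotb (T : finType) (a b : {ffun T -> bool}) : bool :=
  odd #|[set t | a t && b t]|.

(* (Z^a X^b)(Z^c X^d) = (-1)^(b.c) Z^(a+c) X^(b+d) *)
Definition pmul (T : finType) (P Q : pauli T) : pauli T :=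
  Pauli (psgn P (+) psgn Q (+) dotb (px P) (pz Q))
        [ffun t => pz P t (+) pz Q t] [ffun t => px P t (+) px Q t].

Definition pid (T : finType) : pauli T := Pauli false [ffun _ => false] [ffun _ => false].

Definition pprod (T : finType) (l : seq (pauli T)) : pauli T := foldr (@pmul T) (pid T) l.

Definition X_on (T : finType) (D' : T -> Prop) : pauli T :=
  Pauli false [ffun _ => false] [ffun t => `[< D' t >]].
Definition Z_on (T : finType) (D' : T -> Prop) : pauli T :=
  Pauli false [ffun t => `[< D' t >]] [ffun _ => false].

Definition Alat (ax ay az : nat) : finType :=
  ('I_(2 * ax)%N * 'I_(2 * ay)%N * 'I_(2 * az)%N)%type.

Definition inD ax ay az (a : Alat ax ay az) : bool :=
  ~~ odd (a.1.1 + a.1.2 + a.2)%N.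

(* qubits: the points of D *)
Definition site ax ay az : finType := {a : Alat ax ay az | inD a}.

Definition ipt := (int * int * int)%type.

Definition at_pt ax ay az (p : ipt) (a : Alat ax ay az) : Prop :=
  [/\ (p.1.1 %% (2 * ax)%N%:Z)%Z = (a.1.1 : nat)%:Z,
      (p.1.2 %% (2 * ay)%N%:Z)%Z = (a.1.2 : nat)%:Z &
      (p.2 %% (2 * az)%N%:Z)%Z = (a.2 : nat)%:Z].

Definition site_at ax ay az (p : ipt) (q : site ax ay az) : Prop := at_pt p (val q).

Definition padd (p d : ipt) : ipt := (p.1.1 + d.1.1, p.1.2 + d.1.2, p.2 + d.2).
Definition pscale (k : int) (d : ipt) : ipt := (k * d.1.1, k * d.1.2, k * d.2).

Definition ex : ipt := (1, 0, 0).
Definition ey : ipt := (0, 1, 0).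
Definition ez : ipt := (0, 0, 1).

Definition emx : ipt := pscale (-1) ex.
Definition emy : ipt := pscale (-1) ey.
Definition emz : ipt := pscale (-1) ez.

Definition ptA ax ay az (a : Alat ax ay az) : ipt :=
  ((a.1.1 : nat)%:Z, (a.1.2 : nat)%:Z, (a.2 : nat)%:Z).

(* Pauli acting on the qubit at integer point p (reduced mod the lattice);
   the single-qubit operator is applied on every qubit located at p (there is exactly one
   whenever p has even coordinate sum). *)
Definition X_at ax ay az (p : ipt) : pauli (site ax ay az) := X_on (site_at p).
Definition Z_at ax ay az (p : ipt) : pauli (site ax ay az) := Z_on (site_at p).
Arguments X_at {ax ay az}.
Arguments Z_at {ax ay az}.
Definition Y_at ax ay az (p : ipt) : pauli (site ax ay az) := pmul (Z_at p) (X_at p).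
Arguments Y_at {ax ay az}.

Definition Sgen ax ay az (s : Alat ax ay az) : pauli (site ax ay az) :=
  let p := ptA s in
  pprod [:: X_at (padd p ex); X_at (padd p emx);
            Y_at (padd p ey); Y_at (padd p emy);
            Z_at (padd p ez); Z_at (padd p emz)].

Inductive in_stab ax ay az : pauli (site ax ay az) -> Prop :=
| stab_id : in_stab (pid _)
| stab_gen : forall s : Alat ax ay az, ~~ inD s -> in_stab (Sgen s)
| stab_mul : forall P Q, in_stab P -> in_stab Q -> in_stab (pmul P Q).

Definition pcommute (T : finType) (P Q : pauli T) : Prop := pmul P Q = pmul Q P.

Definition gpt (i : nat) : ipt :=
  match i with
  | 0 => (0, 0, 0)
  | 1 => (1, 1, 0)
  | 2 => (1, 0, 1)
  | _ => (0, 1, 1)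
  end.


Definition Dx_half ax ay az (g : ipt) (q : site ax ay az) : Prop :=
  exists l l' : int, site_at (padd (padd g (pscale (2 * l) ez)) (pscale (2 * l') ey)) q.
Definition Dz_half ax ay az (g : ipt) (q : site ax ay az) : Prop :=
  exists l l' : int, site_at (padd (padd g (pscale (2 * l) ex)) (pscale (2 * l') ey)) q.

Definition alph (ax ay az : nat) : nat := gcdn ax (gcdn ay az).
Definition betax ax ay az : nat := (ax %/ alph ax ay az)%N.
Definition betay ax ay az : nat := (ay %/ alph ax ay az)%N.
Definition betaz ax ay az : nat := (az %/ alph ax ay az)%N.

Definition mu (i : nat) : int := (-1) ^+ (i./2).
Definition nu (i : nat) : int := (-1) ^+ ((uphalf i) %% 2).

Definition gij (i j : nat) : ipt := padd (gpt i) (pscale (2 * j%:Z) ey).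

Definition DxL ax ay az (i j : nat) (q : site ax ay az) : Prop :=
  let a := alph ax ay az in
  exists l1 l2 l l' : nat,
    [/\ (l1 < betay ax ay az)%N, (l2 < betaz ax ay az)%N, (l < a)%N, (l' < a)%N &
    site_at
      (padd (padd (padd (padd (gij i j) (pscale (2 * l1%:Z * a%:Z) ey))
                              (pscale (2 * l2%:Z * a%:Z) ez))
                        (pscale l%:Z (padd (pscale (mu i) ez) ey)))
                  (pscale l'%:Z (padd (pscale (mu i) ez) emy))) q].

Definition DzL ax ay az (i j : nat) (q : site ax ay az) : Prop :=
  let a := alph ax ay az in
  exists l1 l2 l l' : nat,
    [/\ (l1 < betay ax ay az)%N, (l2 < betax ax ay az)%N, (l < a)%N, (l' < a)%N &
    site_at
      (padd (padd (padd (padd (gij i j) (pscale (2 * l1%:Z * a%:Z) ey))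
                              (pscale (2 * l2%:Z * a%:Z) ex))
                        (pscale l%:Z (padd (pscale (nu i) ex) ey)))
                  (pscale l'%:Z (padd (pscale (nu i) ex) emy))) q].

Definition XL ax ay az (i j : nat) : pauli (site ax ay az) := X_on (@DxL ax ay az i j).
Definition ZL ax ay az (i j : nat) : pauli (site ax ay az) := Z_on (@DzL ax ay az i j).

(* Main.v *)
Require Import Defs.
From mathcomp Require Import all_boot all_algebra.
From mathcomp Require Import boolp.
From mathcomp Require Import zify ring lra.
Set Implicit Arguments. Unset Strict Implicit.
Import GRing.Theory Num.Theory.
Local Open Scope ring_scope.
Definition cm (M x y : int) : Prop := exists k : int, x - y = k * M.

Definition ff (a c j : nat) : nat := if (j <= c)%N then (c - j)%N else (c + a - j)%N.
Definition RR (a V l : nat) : bool := (l <= V)%N && (V < l + a)%N.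

Lemma nat_even (n : nat) : cm 2 n%:Z 0 <-> ~~ odd n.
Proof.
have E := odd_double_half n. split.
  case=> k Hk; apply/negP=> On; rewrite On in E. rewrite -E in Hk. rewrite -muln2 in Hk. lia.
move=> On; rewrite (negbTE On) in E; exists (n./2)%:Z; rewrite -E -muln2. lia.
Qed.

Lemma stepB (a : nat) (m Y W : int) : (0 < a)%N -> (m = 1 \/ m = -1) -> cm 2 (Y + W) 0 ->
  exists V c : nat, [/\ (V < 2 * a)%N, (c < a)%N, (cm 2 W 0 <-> ~~ odd V), (cm 2 Y 0 <-> cm 2 W 0) &
   forall j : nat, (j < a)%N ->
     ((exists l l' : nat, [/\ (l < a)%N, (l' < a)%N, cm (2 * a%:Z) Y (2 * j%:Z + (l%:Z - l'%:Z)) &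
         cm (2 * a%:Z) W (m * (l%:Z + l'%:Z))]) <-> RR a V (ff a c j))].
Proof.
move=> a0 hm [e He].
have HV1 := divz_eq (m * W) (2 * a%:Z).
have HV2 : 0 <= ((m * W) %% (2 * a%:Z))%Z < 2 * a%:Z by nia.
set r := ((m * W) %% (2 * a%:Z))%Z in HV1 HV2.
set q := ((m * W) %/ (2 * a%:Z))%Z in HV1.
pose V := absz r. have EV : V%:Z = r by lia.
have [h Hh] : exists h, Y + V%:Z = 2 * h.
  case: hm => hm; subst m; [exists (e - a%:Z * q) | exists (e - W - a%:Z * q)]; lia.
have HC1 := divz_eq h a%:Z.
have HC2 : 0 <= (h %% a%:Z)%Z < a%:Z by nia.
set rc := (h %% a%:Z)%Z in HC1 HC2. set qc := (h %/ a%:Z)%Z in HC1.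
pose c := absz rc. have EC : c%:Z = rc by lia.
exists V, c; split.
- lia.
- lia.
- split.
  + case=> k Hk; apply/nat_even; exists (q * (- a%:Z) + m * k); case: hm => hm; subst m; lia.
  + move/nat_even=> [k Hk]; exists (m * (q * a%:Z + k)); case: hm => hm; subst m; lia.
- split; case=> k Hk; [exists (e - k) | exists (e - k)]; lia.
move=> j ja; rewrite /RR /ff; split.
- case=> l [l' [la l'a [k1 Hk1] [k2 Hk2]]].
  have Hs : (l + l')%N = V.
    have : (m * W - (l + l')%:Z) = m * k2 * (2 * a%:Z).
      case: hm => hm; subst m; lia.
    move=> H. have : (q - m * k2 = 0). nia. move=> H'. nia.
  (* Y = 2j + l - l' + 2 a k1, V = l + l' ; so 2h = 2j + 2l + 2a k1 ; h = j + l + a k1 *)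
  have Hjl : h = j%:Z + l%:Z + a%:Z * k1 by lia.
  have Hc : (c = j + l \/ c + a = j + l)%N.
    have : (qc - k1 = 0 \/ qc - k1 = 1) by nia. lia.
  case: ifP => Hjc; lia.
- move=> HR.
  pose l := ff a c j. pose l' := (V - l)%N.
  have Hl : (l < a)%N by rewrite /l /ff; case: ifP => Hjc; lia.
  have Hll' : (l + l' = V)%N by rewrite /l' /l /ff; case: ifP => Hjc; rewrite Hjc in HR; lia.
  exists l, l'; split.
  + done.
  + rewrite /l' /l /ff; case: ifP => Hjc; rewrite Hjc in HR; lia.
  + have Hjl : (j + l = c \/ j + l = c + a)%N by rewrite /l /ff; case: ifP => Hjc; lia.
    case: Hjl => Hjl.
    * exists qc. have E2 : l'%:Z = V%:Z - l%:Z by lia. rewrite E2. lia.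
    * exists (qc - 1). have E2 : l'%:Z = V%:Z - l%:Z by lia. rewrite E2. lia.
  + exists (m * q).  have E2 : (l + l')%:Z = V%:Z by rewrite Hll'.
    rewrite -PoszD E2; case: hm => hm; subst m; lia.
Qed.

Lemma red1 (a b : nat) (Y c : int) : (0 < a)%N -> (0 < b)%N ->
  (exists l1 : nat, (l1 < b)%N /\ cm (2 * (a * b)%N%:Z) Y (c + 2 * l1%:Z * a%:Z)) <-> cm (2 * a%:Z) Y c.
Proof.
move=> a0 b0; split.
  by case=> l1 [_ [k Hk]]; exists (k * b%:Z + l1%:Z); rewrite PoszM in Hk; lia.
case=> k Hk.
have H1 := divz_eq k b; have H2 : 0 <= (k %% b)%Z < b by nia.
exists (absz (k %% b)%Z); split; first by lia.
exists (k %/ b)%Z; rewrite PoszM. have -> : (absz (k %% b)%Z)%:Z = (k %% b)%Z by lia.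
nia.
Qed.

Lemma ff_lt a c j : (c < a)%N -> (j < a)%N -> (ff a c j < a)%N.
Proof. by rewrite /ff; case: ifP => H; lia. Qed.

Lemma ffK a c j : (c < a)%N -> (j < a)%N -> ff a c (ff a c j) = j.
Proof.
move=> ca ja; have [H|H] := leqP j c.
  have -> : ff a c j = (c - j)%N by rewrite /ff H.
  by rewrite /ff; case: leqP; lia.
have -> : ff a c j = (c + a - j)%N by rewrite /ff leqNgt H.
by rewrite /ff; case: leqP; lia.
Qed.

Lemma perm_ff a c : (c < a)%N -> perm_eq (map (ff a c) (iota 0 a)) (iota 0 a).
Proof.
move=> ca; apply: uniq_perm; last 1 first.
- move=> x; apply/mapP/idP.
  + by case=> j; rewrite !mem_iota !add0n => ja ->; apply: ff_lt.
  + rewrite mem_iota add0n => xa; exists (ff a c x); first by rewrite mem_iota add0n ff_lt.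
    by rewrite ffK.
- rewrite map_inj_in_uniq ?iota_uniq // => x y; rewrite !mem_iota /= => xa ya E.
  by rewrite add0n in xa ya; rewrite -(ffK ca xa) E ffK.
- exact: iota_uniq.
Qed.

Lemma cnt_int lo hi n : (lo <= hi)%N ->
  count (fun l => (lo <= l)%N && (l < hi)%N) (iota 0 n) = (minn hi n - minn lo n)%N.
Proof.
move=> lh; elim: n => [|n IH]; first by rewrite /= !minn0.
rewrite -addn1 iotaD count_cat IH /= add0n. case: (lo <= n)%N /idP => H1; case: (n < hi)%N /idP => H2 /=; lia.
Qed.

Lemma count_RR a V : (0 < a)%N -> (V < 2 * a)%N -> odd (count (RR a V) (iota 0 a)) = ~~ odd V.
Proof.
move=> a0 Va.
have -> : count (RR a V) (iota 0 a) = count (fun l => (V.+1 - a <= l)%N && (l < V.+1)%N) (iota 0 a).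
  by apply: eq_count => l; rewrite /RR; apply/idP/idP => /andP [H1 H2]; apply/andP; split; lia.
rewrite cnt_int; last by lia.
have [E|E] : (minn V.+1 a - minn (V.+1 - a) a = V.+1 \/ minn V.+1 a - minn (V.+1 - a) a + V.+1 = 2 * a)%N by lia.
  by rewrite E.
have := congr1 odd E. rewrite oddD /= mul2n odd_double. by case: (odd _); case: (odd V).
Qed.

Definition Pk (a b1 bw : nat) (m Y W : int) (j : nat) : Prop :=
  exists l1 l2 l l' : nat, [/\ (l1 < b1)%N, (l2 < bw)%N, (l < a)%N, (l' < a)%N &
    cm (2 * (a * b1)%N%:Z) Y ((2 * j%:Z + (l%:Z - l'%:Z)) + 2 * l1%:Z * a%:Z) /\
    cm (2 * (a * bw)%N%:Z) W (m * (l%:Z + l'%:Z) + 2 * l2%:Z * a%:Z)].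

Lemma key (a b1 bw : nat) (m Y W : int) : (0 < a)%N -> (0 < b1)%N -> (0 < bw)%N ->
  (m = 1 \/ m = -1) -> cm 2 (Y + W) 0 ->
  (cm 2 Y 0 /\ cm 2 W 0) <-> odd (count (fun j => `[< Pk a b1 bw m Y W j >]) (iota 0 a)).
Proof.
move=> a0 b0 w0 hm hYW.
have [V [c [Va ca HW HY HP]]] := stepB a0 hm hYW.
have -> : count (fun j => `[< Pk a b1 bw m Y W j >]) (iota 0 a) = count (RR a V \o ff a c) (iota 0 a).
  apply: eq_in_count => j; rewrite mem_iota add0n => ja /=.
  apply: (asbool_equiv_eqP idP); rewrite -HP //; split.
  - case=> l1 [l2 [l [l' [h1 h2 h3 h4 [h5 h6]]]]]; exists l, l'; split => //.
    + by apply/(red1 _ _ a0 b0); exists l1.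
    + by apply/(red1 _ _ a0 w0); exists l2.
  - case=> l [l' [h3 h4 /(red1 _ _ a0 b0) [l1 [h1 h5]] /(red1 _ _ a0 w0) [l2 [h2 h6]]]].
    by exists l1, l2, l, l'; split.
rewrite -count_map (permP (perm_ff ca)) count_RR //.
rewrite HY; split; [by case=> _ /HW | by move=> H; split; apply/HW].
Qed.

Section PauliAlg.
Variable T : finType.

Lemma dotb0 (a : {ffun T -> bool}) : dotb a [ffun _ => false] = false.
Proof.
rewrite /dotb (_ : [set t | a t && [ffun _ => false] t] = set0) ?cards0 //.
by apply/setP => t; rewrite !inE ffunE andbF.
Qed.

Lemma dotbC (a b : {ffun T -> bool}) : dotb a b = dotb b a.
Proof.
rewrite /dotb (_ : [set t | a t && b t] = [set t | b t && a t]) //.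
by apply/setP => t; rewrite !inE andbC.
Qed.

Lemma dotbD (a b c : {ffun T -> bool}) :
  dotb a [ffun t => b t (+) c t] = dotb a b (+) dotb a c.
Proof.
rewrite /dotb.
set B := [set t | a t && b t]; set C := [set t | a t && c t].
have -> : [set t | a t && [ffun t => b t (+) c t] t] = (B :|: C) :\: (B :&: C).
  apply/setP => t; rewrite !inE ffunE.
  by case: (a t); case: (b t); case: (c t).
have E1 := cardsUI B C.
have E2 := cardsID (B :&: C) (B :|: C).
move: E2; rewrite (_ : (B :|: C) :&: (B :&: C) = B :&: C); last first.
  by apply/setIidPr; apply: subset_trans (subsetIl _ _) (subsetUl _ _).
move=> E2.
have E : (#|B| + #|C| = #|(B :|: C) :\: (B :&: C)| + (#|B :&: C|).*2)%N.
  rewrite -E1 -E2 -addnn; lia.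
by rewrite -oddD E oddD odd_double addbF.
Qed.

Lemma pmul_pid (P : pauli T) : pmul P (pid T) = P.
Proof.
case: P => s z x; rewrite /pmul /pid /= dotb0 addbF addbF.
by congr Pauli; apply/ffunP => t; rewrite !ffunE addbF.
Qed.

Lemma pprodX (I : Type) (D : I -> T -> Prop) (s : seq I) :
  pprod [seq X_on (D j) | j <- s] =
  Pauli false [ffun _ => false] [ffun t => odd (count (fun j => `[< D j t >]) s)].
Proof.
elim: s => [|j s IH] /=.
  by rewrite /pid; congr Pauli; apply/ffunP => t; rewrite !ffunE.
rewrite IH /pmul /= dotb0; congr Pauli; apply/ffunP => t; rewrite !ffunE //.
by rewrite oddD; case: `[< D j t >].
Qed.

Lemma pprodZ (I : Type) (D : I -> T -> Prop) (s : seq I) :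
  pprod [seq Z_on (D j) | j <- s] =
  Pauli false [ffun t => odd (count (fun j => `[< D j t >]) s)] [ffun _ => false].
Proof.
elim: s => [|j s IH] /=.
  by rewrite /pid; congr Pauli; apply/ffunP => t; rewrite !ffunE.
rewrite IH /pmul /= dotbC dotb0; congr Pauli; apply/ffunP => t; rewrite !ffunE //.
by rewrite oddD; case: `[< D j t >].
Qed.

Lemma commX (D : T -> Prop) (S : pauli T) :
  dotb [ffun t => `[< D t >]] (pz S) = false -> pcommute (X_on D) S.
Proof.
case: S => s z x /= H; rewrite /pcommute /pmul /= H dotb0 /=.
by congr Pauli; rewrite ?addbF //; apply/ffunP => t; rewrite !ffunE addbC.
Qed.

Lemma commZ (D : T -> Prop) (S : pauli T) :
  dotb (px S) [ffun t => `[< D t >]] = false -> pcommute (Z_on D) S.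
Proof.
case: S => s z x /= H; rewrite /pcommute /pmul /= H dotbC dotb0 /=.
by congr Pauli; rewrite ?addbF //; apply/ffunP => t; rewrite !ffunE addbC.
Qed.
End PauliAlg.


Lemma cm_mod (M x : int) (n : nat) : 0 < M -> (n%:Z < M) ->
  ((x %% M)%Z = n%:Z <-> cm M x n).
Proof.
move=> M0 nM; split=> [H|[k Hk]].
  exists (x %/ M)%Z; have := divz_eq x M; lia.
have := divz_eq x M; have : 0 <= (x %% M)%Z < M by nia.
move=> H1 H2. have : (x %/ M)%Z = k by nia. nia.
Qed.

Section Sites.
Variables ax ay az : nat.
Local Notation st := (site ax ay az).
Definition cx (q : st) : int := ((val q).1.1 : nat)%:Z.
Definition cy (q : st) : int := ((val q).1.2 : nat)%:Z.
Definition cz (q : st) : int := ((val q).2 : nat)%:Z.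

Lemma site_atE (p : ipt) (q : st) : site_at p q <->
  [/\ cm (2 * ax)%N%:Z p.1.1 (cx q), cm (2 * ay)%N%:Z p.1.2 (cy q) & cm (2 * az)%N%:Z p.2 (cz q)].
Proof.
rewrite /site_at /at_pt /cx /cy /cz.
case: (val q) => [[x y] z] /=.
have E : forall (k : nat) (w : int) (n : 'I_(2 * k)), (w %% (2 * k)%N%:Z)%Z = (n : nat)%:Z <-> cm (2 * k)%N%:Z w n.
  move=> k w n; have := ltn_ord n; move=> hn; apply: cm_mod; lia.
by split=> -[h1 h2 h3]; split; apply/E.
Qed.

Lemma site_uniq (p : ipt) (q q' : st) : site_at p q -> site_at p q' -> q = q'.
Proof.
rewrite /site_at /at_pt => -[h1 h2 h3] [h1' h2' h3']; apply: val_inj.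
move: h1 h2 h3 h1' h2' h3'; case: (val q) => [[x y] z]; case: (val q') => [[x' y'] z'] /=.
move=> -> -> -> [ex] [ey] [ez].
by congr (_, _, _); apply: val_inj.
Qed.

Lemma inD_even (q : st) : cm 2 (cx q + cy q + cz q) 0.
Proof.
have := valP q; rewrite /inD /cx /cy /cz => H.
have /nat_even := H. by rewrite !PoszD.
Qed.

Lemma ord_of (w : int) (k : nat) : (0 < k)%N ->
  exists n : 'I_(2 * k), cm (2 * k)%N%:Z w (n : nat)%:Z.
Proof.
move=> k0; have D := divz_eq w (2 * k)%N%:Z.
have B : 0 <= (w %% (2 * k)%N%:Z)%Z < (2 * k)%N%:Z.
  by rewrite modz_ge0 ?ltz_pmod //; lia.
move: D B; set r := (_ %% _)%Z; set q := (_ %/ _)%Z => D B.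
have H : (absz r < 2 * k)%N by lia.
exists (Ordinal H); exists q => /=; lia.
Qed.

Lemma site_ex (p : ipt) : (0 < ax)%N -> (0 < ay)%N -> (0 < az)%N ->
  cm 2 (p.1.1 + p.1.2 + p.2) 0 -> exists q : st, site_at p q.
Proof.
move=> hx hy hz [e He].
have [nx [kx Hx]] := ord_of p.1.1 hx.
have [ny [ky Hy]] := ord_of p.1.2 hy.
have [nz [kz Hz]] := ord_of p.2 hz.
have Ha : inD ((nx, ny, nz) : Alat ax ay az).
  rewrite /inD; apply/nat_even.
  exists (e - kx * ax%:Z - ky * ay%:Z - kz * az%:Z).
  rewrite !PoszM in Hx Hy Hz. rewrite /= !PoszD. lia.
exists (exist (fun a : Alat ax ay az => is_true (inD a)) (nx, ny, nz) Ha); rewrite /site_at /at_pt /=; split; apply/cm_mod => /=.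
- lia.
- have := ltn_ord nx; lia.
- by exists kx.
- lia.
- have := ltn_ord ny; lia.
- by exists ky.
- lia.
- have := ltn_ord nz; lia.
- by exists kz.
Qed.

End Sites.


Lemma cm_flip (M M' g s q : int) : M = M' -> cm M (g + s) q <-> cm M' (q - g) s.
Proof. by move=> <-; split=> -[k Hk]; exists (- k); lia. Qed.

Lemma cm_2 (k : nat) (x y : int) : cm (2 * k)%N%:Z x y -> cm 2 x y.
Proof. by case=> c Hc; exists (c * k%:Z); rewrite PoszM in Hc; lia. Qed.

Section Half.
Variables ax ay az : nat.
Local Notation st := (site ax ay az).

Lemma Dx_halfE (g : ipt) (q : st) : Dx_half g q <->
  [/\ cm (2 * ax)%N%:Z g.1.1 (cx q), cm 2 g.1.2 (cy q) & cm 2 g.2 (cz q)].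
Proof.
rewrite /Dx_half; split.
- case=> l [l' /site_atE [[k1 h1] /cm_2 [k2 h2] /cm_2 [k3 h3]]] /=.
  rewrite /= in h1 h2 h3.
  split; [exists k1 | exists (k2 - l') | exists (k3 - l)]; lia.
- case=> -[k1 h1] [k2 h2] [k3 h3]; exists (- k3), (- k2); apply/site_atE => /=.
  split; [exists k1 | exists 0 | exists 0]; lia.
Qed.

Lemma Dz_halfE (g : ipt) (q : st) : Dz_half g q <->
  [/\ cm 2 g.1.1 (cx q), cm 2 g.1.2 (cy q) & cm (2 * az)%N%:Z g.2 (cz q)].
Proof.
rewrite /Dz_half; split.
- case=> l [l' /site_atE [/cm_2 [k1 h1] /cm_2 [k2 h2] [k3 h3]]] /=.
  rewrite /= in h1 h2 h3.
  split; [exists (k1 - l) | exists (k2 - l') | exists k3]; lia.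
- case=> -[k1 h1] [k2 h2] [k3 h3]; exists (- k1), (- k2); apply/site_atE => /=.
  split; [exists 0 | exists 0 | exists k3]; lia.
Qed.

End Half.


Section L.
Variables ax ay az : nat.
Local Notation st := (site ax ay az).
Local Notation a := (alph ax ay az).
Local Notation bx := (betax ax ay az).
Local Notation b1 := (betay ax ay az).
Local Notation bz := (betaz ax ay az).

Lemma DxLE (i j : nat) (q : st) : ay = (a * b1)%N -> az = (a * bz)%N ->
  DxL i j q <-> cm (2 * ax)%N%:Z (gpt i).1.1 (cx q) /\
     Pk a b1 bz (mu i) (cy q - (gpt i).1.2) (cz q - (gpt i).2) j.
Proof.
move=> Ha Hz; rewrite /DxL /Pk.
have Ey : (2 * ay)%N%:Z = 2 * (a * b1)%N%:Z by rewrite -Ha; lia.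
have Ez : (2 * az)%N%:Z = 2 * (a * bz)%N%:Z by rewrite -Hz; lia.
split.
- case=> l1 [l2 [l [l' [h1 h2 h3 h4 /site_atE [[kx hx] [ky hy] [kz hz]]]]]].
  rewrite /= in hx hy hz; rewrite Ey in hy; rewrite Ez in hz.
  split; first by exists kx; lia.
  exists l1, l2, l, l'; split => //; split.
  + exists (- ky); lia.
  + exists (- kz); lia.
- case=> -[kx hx] [l1 [l2 [l [l' [h1 h2 h3 h4 [[ky hy] [kz hz]]]]]]].
  exists l1, l2, l, l'; split => //; apply/site_atE => /=.
  rewrite Ey Ez; split; [exists kx | exists (- ky) | exists (- kz)]; lia.
Qed.

Lemma DzLE (i j : nat) (q : st) : ay = (a * b1)%N -> ax = (a * bx)%N ->
  DzL i j q <-> cm (2 * az)%N%:Z (gpt i).2 (cz q) /\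
     Pk a b1 bx (nu i) (cy q - (gpt i).1.2) (cx q - (gpt i).1.1) j.
Proof.
move=> Ha Hx; rewrite /DzL /Pk.
have Ey : (2 * ay)%N%:Z = 2 * (a * b1)%N%:Z by rewrite -Ha; lia.
have Ex : (2 * ax)%N%:Z = 2 * (a * bx)%N%:Z by rewrite -Hx; lia.
split.
- case=> l1 [l2 [l [l' [h1 h2 h3 h4 /site_atE [[kx hx] [ky hy] [kz hz]]]]]].
  rewrite /= in hx hy hz; rewrite Ey in hy; rewrite Ex in hx.
  split; first by exists kz; lia.
  exists l1, l2, l, l'; split => //; split.
  + exists (- ky); lia.
  + exists (- kx); lia.
- case=> -[kz hz] [l1 [l2 [l [l' [h1 h2 h3 h4 [[ky hy] [kx hx]]]]]]].
  exists l1, l2, l, l'; split => //; apply/site_atE => /=.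
  rewrite Ey Ex; split; [exists (- kx) | exists (- ky) | exists kz]; lia.
Qed.
End L.


Section C.
Variables ax ay az : nat.
Local Notation st := (site ax ay az).
Definition Ind (p : ipt) : {ffun st -> bool} := [ffun t => `[< site_at p t >]].

Lemma dot_at (D : st -> Prop) (p : ipt) :
  dotb [ffun t => `[< D t >]] (Ind p) = `[< exists t, site_at p t /\ D t >].
Proof.
rewrite /dotb /Ind; case: (asboolP (exists t, site_at p t /\ D t)) => [[t0 [h0 d0]] | hn].
  rewrite (_ : [set t | _] = [set t0]) ?cards1 //.
  apply/setP => t; rewrite !inE !ffunE; apply/idP/eqP => [/andP [_ /asboolP At] | ->].
    exact: site_uniq At h0.
  by rewrite (asboolT d0) (asboolT h0).
rewrite (_ : [set t | _] = set0) ?cards0 //.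
apply/setP => t; rewrite !inE !ffunE; apply/negbTE/negP => /andP [/asboolP Dt /asboolP At].
by apply: hn; exists t.
Qed.

Lemma pz_Sgen (s : Alat ax ay az) :
  pz (Sgen s) = [ffun t => Ind (padd (ptA s) ey) t (+) ([ffun t => Ind (padd (ptA s) emy) t (+)
      ([ffun t => Ind (padd (ptA s) ez) t (+) Ind (padd (ptA s) emz) t]) t]) t].
Proof.
apply/ffunP => t; rewrite /Sgen /pprod /= !ffunE /=.
by rewrite ?addFb ?addbF.
Qed.

Lemma px_Sgen (s : Alat ax ay az) :
  px (Sgen s) = [ffun t => Ind (padd (ptA s) ex) t (+) ([ffun t => Ind (padd (ptA s) emx) t (+)
      ([ffun t => Ind (padd (ptA s) ey) t (+) Ind (padd (ptA s) emy) t]) t]) t].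
Proof.
apply/ffunP => t; rewrite /Sgen /pprod /= !ffunE /=.
by rewrite ?addFb ?addbF.
Qed.

Definition CX (g p : ipt) : Prop := cm 2 (p.1.1 + p.1.2 + p.2) 0 /\
  [/\ cm (2 * ax)%N%:Z g.1.1 p.1.1, cm 2 g.1.2 p.1.2 & cm 2 g.2 p.2].
Definition CZ (g p : ipt) : Prop := cm 2 (p.1.1 + p.1.2 + p.2) 0 /\
  [/\ cm 2 g.1.1 p.1.1, cm 2 g.1.2 p.1.2 & cm (2 * az)%N%:Z g.2 p.2].

Lemma ex_CX (g p : ipt) : (0 < ax)%N -> (0 < ay)%N -> (0 < az)%N ->
  (exists t : st, site_at p t /\ Dx_half g t) <-> CX g p.
Proof.
move=> hx hy hz; split.
- case=> t [/site_atE [[k1 h1] /cm_2 [k2 h2] /cm_2 [k3 h3]] /Dx_halfE [[l1 e1] [l2 e2] [l3 e3]]].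
  have [k Hk] := inD_even t.
  split; first by exists (k + k1 * ax%:Z + k2 + k3); rewrite PoszM in h1; lia.
  split; [exists (l1 - k1) | exists (l2 - k2) | exists (l3 - k3)]; lia.
- case=> hs [[k1 h1] [k2 h2] [k3 h3]].
  have [t Ht] := site_ex hx hy hz hs; exists t; split => //.
  move/site_atE: Ht => [[j1 f1] /cm_2 [j2 f2] /cm_2 [j3 f3]].
  apply/Dx_halfE; split; [exists (k1 + j1) | exists (k2 + j2) | exists (k3 + j3)]; lia.
Qed.

Lemma ex_CZ (g p : ipt) : (0 < ax)%N -> (0 < ay)%N -> (0 < az)%N ->
  (exists t : st, site_at p t /\ Dz_half g t) <-> CZ g p.
Proof.
move=> hx hy hz; split.
- case=> t [/site_atE [/cm_2 [k1 h1] /cm_2 [k2 h2] [k3 h3]] /Dz_halfE [[l1 e1] [l2 e2] [l3 e3]]].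
  have [k Hk] := inD_even t.
  split; first by exists (k + k1 + k2 + k3 * az%:Z); rewrite PoszM in h3; lia.
  split; [exists (l1 - k1) | exists (l2 - k2) | exists (l3 - k3)]; lia.
- case=> hs [[k1 h1] [k2 h2] [k3 h3]].
  have [t Ht] := site_ex hx hy hz hs; exists t; split => //.
  move/site_atE: Ht => [/cm_2 [j1 f1] /cm_2 [j2 f2] [j3 f3]].
  apply/Dz_halfE; split; [exists (k1 + j1) | exists (k2 + j2) | exists (k3 + j3)]; lia.
Qed.

Lemma CX_shift (g p p' : ipt) (dy dz : int) : p'.1.1 = p.1.1 -> p'.1.2 = p.1.2 + 2 * dy ->
  p'.2 = p.2 + 2 * dz -> CX g p <-> CX g p'.
Proof.
move=> e1 e2 e3; rewrite /CX e1 e2 e3; split.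
- case=> -[k0 h0] [[k1 h1] [k2 h2] [k3 h3]]; split; first by exists (k0 + dy + dz); lia.
  split; [exists k1 | exists (k2 - dy) | exists (k3 - dz)]; lia.
- case=> -[k0 h0] [[k1 h1] [k2 h2] [k3 h3]]; split; first by exists (k0 - dy - dz); lia.
  split; [exists k1 | exists (k2 + dy) | exists (k3 + dz)]; lia.
Qed.

Lemma CZ_shift (g p p' : ipt) (dx dy : int) : p'.2 = p.2 -> p'.1.2 = p.1.2 + 2 * dy ->
  p'.1.1 = p.1.1 + 2 * dx -> CZ g p <-> CZ g p'.
Proof.
move=> e1 e2 e3; rewrite /CZ e1 e2 e3; split.
- case=> -[k0 h0] [[k1 h1] [k2 h2] [k3 h3]]; split; first by exists (k0 + dy + dx); lia.
  split; [exists (k1 - dx) | exists (k2 - dy) | exists k3]; lia.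
- case=> -[k0 h0] [[k1 h1] [k2 h2] [k3 h3]]; split; first by exists (k0 - dy - dx); lia.
  split; [exists (k1 + dx) | exists (k2 + dy) | exists k3]; lia.
Qed.

Lemma commX_half (g : ipt) (s : Alat ax ay az) : (0 < ax)%N -> (0 < ay)%N -> (0 < az)%N ->
  pcommute (X_on (Dx_half g)) (Sgen s).
Proof.
move=> hx hy hz; apply: commX; rewrite pz_Sgen !dotbD !dot_at.
rewrite (asbool_equiv_eq (ex_CX g _ hx hy hz)) (asbool_equiv_eq (ex_CX g (padd (ptA s) emy) hx hy hz)).
rewrite (asbool_equiv_eq (ex_CX g (padd (ptA s) ez) hx hy hz)) (asbool_equiv_eq (ex_CX g (padd (ptA s) emz) hx hy hz)).
rewrite (asbool_equiv_eq (@CX_shift g (padd (ptA s) ey) (padd (ptA s) emy) (-1) 0 _ _ _)) /=; try lia.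
rewrite (asbool_equiv_eq (@CX_shift g (padd (ptA s) ez) (padd (ptA s) emz) 0 (-1) _ _ _)) /=; try lia.
all: by rewrite ?addbb.
Qed.

Lemma commZ_half (g : ipt) (s : Alat ax ay az) : (0 < ax)%N -> (0 < ay)%N -> (0 < az)%N ->
  pcommute (Z_on (Dz_half g)) (Sgen s).
Proof.
move=> hx hy hz; apply: commZ; rewrite dotbC px_Sgen !dotbD !dot_at.
rewrite (asbool_equiv_eq (ex_CZ g _ hx hy hz)) (asbool_equiv_eq (ex_CZ g (padd (ptA s) emx) hx hy hz)).
rewrite (asbool_equiv_eq (ex_CZ g (padd (ptA s) ey) hx hy hz)) (asbool_equiv_eq (ex_CZ g (padd (ptA s) emy) hx hy hz)).
rewrite (asbool_equiv_eq (@CZ_shift g (padd (ptA s) ex) (padd (ptA s) emx) (-1) 0 _ _ _)) /=; try lia.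
rewrite (asbool_equiv_eq (@CZ_shift g (padd (ptA s) ey) (padd (ptA s) emy) 0 (-1) _ _ _)) /=; try lia.
all: by rewrite ?addbb.
Qed.
End C.


Lemma sign_pm (n : nat) : ((-1) ^+ n : int) = 1 \/ ((-1) ^+ n : int) = -1.
Proof. by rewrite -signr_odd; case: (odd n); [right | left]. Qed.

Lemma gpt_even (i : nat) : cm 2 ((gpt i).1.1 + (gpt i).1.2 + (gpt i).2) 0.
Proof. by case: i => [|[|[|i]]] /=; [exists 0 | exists 1 | exists 1 | exists 1]. Qed.

Section Main.
Variables ax ay az : nat.
Hypotheses (hx : (0 < ax)%N) (hy : (0 < ay)%N) (hz : (0 < az)%N).
Local Notation st := (site ax ay az).
Local Notation a := (alph ax ay az).

Lemma a_gt0 : (0 < a)%N.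
Proof. by rewrite /alph gcdn_gt0 hx. Qed.

Lemma a_dvd : [/\ ax = (a * betax ax ay az)%N, ay = (a * betay ax ay az)%N & az = (a * betaz ax ay az)%N].
Proof.
rewrite /betax /betay /betaz /alph; split; rewrite mulnC divnK //.
- exact: dvdn_gcdl.
- exact: dvdn_trans (dvdn_gcdr _ _) (dvdn_gcdl _ _).
- exact: dvdn_trans (dvdn_gcdr _ _) (dvdn_gcdr _ _).
Qed.

Lemma mainX (i : nat) :
  X_on (@Dx_half ax ay az (gpt i)) = pprod [seq XL ax ay az i j | j <- iota 0 a].
Proof.
have [Ex Ey Ez] := a_dvd; have a0 := a_gt0.
have bY : (0 < betay ax ay az)%N by move: Ey; lia.
have bZ : (0 < betaz ax ay az)%N by move: Ez; lia.
rewrite (pprodX (fun j => @DxL ax ay az i j)) /X_on; congr Pauli; apply/ffunP => t; rewrite !ffunE.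
case: (asboolP (cm (2 * ax)%N%:Z (gpt i).1.1 (cx t))) => Hc; last first.
  rewrite (@eq_in_count _ _ pred0); first by rewrite count_pred0; apply/asboolF => /Dx_halfE [].
  by move=> j _; apply/asboolF => /(DxLE _ _ _ Ey Ez) [].
rewrite (@eq_in_count _ _ (fun j => `[< Pk a (betay ax ay az) (betaz ax ay az) (mu i)
           (cy t - (gpt i).1.2) (cz t - (gpt i).2) j >])); last first.
  move=> j _; apply: asbool_equiv_eq; split; first by case/(DxLE _ _ _ Ey Ez).
  by move=> H; apply/(DxLE _ _ _ Ey Ez).
apply: (asbool_equiv_eqP idP); rewrite -key //; last first.
- have [k Hk] := inD_even t; have [k' Hk'] := gpt_even i; case: Hc => c Hc.
  exists (k - k' + c * ax%:Z); rewrite PoszM in Hc; lia.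
- exact: sign_pm.
split.
- case/Dx_halfE=> _ [k1 h1] [k2 h2]; split; [exists (- k1) | exists (- k2)]; lia.
- case=> -[k1 h1] [k2 h2]; apply/Dx_halfE; split => //; [exists (- k1) | exists (- k2)]; lia.
Qed.

Lemma mainZ (i : nat) :
  Z_on (@Dz_half ax ay az (gpt i)) = pprod [seq ZL ax ay az i j | j <- iota 0 a].
Proof.
have [Ex Ey Ez] := a_dvd; have a0 := a_gt0.
have bY : (0 < betay ax ay az)%N by move: Ey; lia.
have bX : (0 < betax ax ay az)%N by move: Ex; lia.
rewrite (pprodZ (fun j => @DzL ax ay az i j)) /Z_on; congr Pauli; apply/ffunP => t; rewrite !ffunE.
case: (asboolP (cm (2 * az)%N%:Z (gpt i).2 (cz t))) => Hc; last first.
  rewrite (@eq_in_count _ _ pred0); first by rewrite count_pred0; apply/asboolF => /Dz_halfE [].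
  by move=> j _; apply/asboolF => /(DzLE _ _ _ Ey Ex) [].
rewrite (@eq_in_count _ _ (fun j => `[< Pk a (betay ax ay az) (betax ax ay az) (nu i)
           (cy t - (gpt i).1.2) (cx t - (gpt i).1.1) j >])); last first.
  move=> j _; apply: asbool_equiv_eq; split; first by case/(DzLE _ _ _ Ey Ex).
  by move=> H; apply/(DzLE _ _ _ Ey Ex).
apply: (asbool_equiv_eqP idP); rewrite -key //; last first.
- have [k Hk] := inD_even t; have [k' Hk'] := gpt_even i; case: Hc => c Hc.
  exists (k - k' + c * az%:Z); rewrite PoszM in Hc; lia.
- exact: sign_pm.
split.
- case/Dz_halfE=> [[k1 h1] [k2 h2] _]; split; [exists (- k2) | exists (- k1)]; lia.
- case=> -[k2 h2] [k1 h1]; apply/Dz_halfE; split => //; [exists (- k1) | exists (- k2)]; lia.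
Qed.
End Main.

Unset Implicit Arguments.
Theorem corollary3 (ax ay az : nat) :
  (1 < ax)%N -> (1 < ay)%N -> (1 < az)%N ->
  odd (betay ax ay az) ->
  forall i : nat, (i < 4)%N ->
    (forall s : Alat ax ay az, ~~ inD s ->
       pcommute (X_on (@Dx_half ax ay az (gpt i))) (Sgen s)) /\
    (forall s : Alat ax ay az, ~~ inD s ->
       pcommute (Z_on (@Dz_half ax ay az (gpt i))) (Sgen s)) /\
    (exists St, in_stab St /\
       X_on (@Dx_half ax ay az (gpt i)) =
       pmul (pprod [seq XL ax ay az i j | j <- iota 0 (alph ax ay az)]) St) /\
    (exists St, in_stab St /\
       Z_on (@Dz_half ax ay az (gpt i)) =
       pmul (pprod [seq ZL ax ay az i j | j <- iota 0 (alph ax ay az)]) St).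
Proof.
move=> h1 h2 h3 _ i _.
have hx : (0 < ax)%N by lia.
have hy : (0 < ay)%N by lia.
have hz : (0 < az)%N by lia.
split; first by move=> s _; apply: commX_half.
split; first by move=> s _; apply: commZ_half.
split; exists (pid _); split; try exact: stab_id; rewrite pmul_pid.
- exact: mainX.
- exact: mainZ.
Qed.
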